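(* Let $G$ be a group and $K$ a zero-sum-free semifield. (1) There is a one-to-one correspondence between isomorphism classes of pairs $(V,v)$, where $V$ is an indecomposable representation of $G$ over $K$ and $v$ is a vector belonging to some basis of $V$, and pairs $(H,\chi)$ consisting of a subgroup $H\subseteq G$ and a group homomorphism $\chi:H\to K^\times$. Here $(V,v)$ and $(W,w)$ are isomorphic if there is an isomorphism of representations $V\to W$ mapping $v$ to $w$. (2) There is a one-to-one correspondence between isomorphism classes of indecomposable representations of $G$ over $K$ and equivalence classes of pairs $(H,\chi)$ as in (1), where $(H,\chi)\sim(H',\chi')$ if there is $g\in G$ with $H'=gHg^{-1}$ and $\chi'(h')=\chi(g^{-1}h'g)$ for all $h'\in H'$.
   Context: All semirings are commutative. A semifield is a semiring whose nonzero elements form a multiplicative group $K^\times$; it is zero-sum-free if $a+b=0$ implies $a=b=0$. A representation of $G$ over $K$ is a $K$-linear action of $G$ on a free module $K^n$; isomorphisms of representations are $G$-equivariant $K$-module isomorphisms. $V$ is indecomposable if it cannot be written as a direct sum of nontrivial $G$-stable submodules. *)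

(* Defs.v *)
(* Free modules
   K^(I) over an arbitrary basis index type I are encoded as finitely supported
   functions I -> K. *)
From HB Require Import structures.
From mathcomp Require Import all_boot all_algebra.
From Stdlib Require List.
Unset Implicit Arguments.
Import GRing.Theory.
Local Open Scope ring_scope.

Section Group.
Variables (G : Type) (mul : G -> G -> G) (one : G) (inv : G -> G).

Record is_group : Prop := {
  gmulA : forall x y z, mul x (mul y z) = mul (mul x y) z;
  gmul1g : forall x, mul one x = x;
  gmulVg : forall x, mul (inv x) x = one }.

Definition is_subgroup (H : G -> Prop) : Prop :=
  H one /\ (forall x y, H x -> H y -> H (mul x y)) /\ (forall x, H x -> H (inv x)).
End Group.

(* nonzero elements form a multiplicative group (1 <> 0 is part of comNzSemiRingType) *)
Definition semifield (K : comNzSemiRingType) : Prop :=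
  forall x : K, x != 0 -> exists y : K, x * y = 1.

Definition zero_sum_free (K : comNzSemiRingType) : Prop :=
  forall a b : K, a + b = 0 -> a = 0 /\ b = 0.

Section Modules.
Variable K : comNzSemiRingType.

Definition fin_supp (I : Type) (f : I -> K) : Prop :=
  exists s : list I, forall i, ~ List.In i s -> f i = 0.

Definition vzero (I : Type) : I -> K := fun _ => 0.
Definition vadd (I : Type) (f g : I -> K) : I -> K := fun i => f i + g i.
Definition vscale (I : Type) (c : K) (f : I -> K) : I -> K := fun i => c * f i.

Definition is_linear (I J : Type) (phi : (I -> K) -> (J -> K)) : Prop :=
  (forall f, fin_supp I f -> fin_supp J (phi f)) /\
  (forall f g, fin_supp I f -> fin_supp I g -> phi (vadd I f g) = vadd J (phi f) (phi g)) /\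
  (forall c f, fin_supp I f -> phi (vscale I c f) = vscale J c (phi f)).

Definition lincomb (I J : Type) (s : list J) (c : J -> K) (b : J -> I -> K) : I -> K :=
  foldr (fun j acc => vadd I (vscale I (c j) (b j)) acc) (vzero I) s.

Definition supported_on (J : Type) (c : J -> K) (s : list J) : Prop :=
  List.NoDup s /\ forall j, ~ List.In j s -> c j = 0.

Definition is_basis (I J : Type) (b : J -> I -> K) : Prop :=
  (forall j, fin_supp I (b j)) /\
  (forall f, fin_supp I f -> exists (c : J -> K) (s : list J),
      supported_on J c s /\ f = lincomb I J s c b) /\
  (forall c s c' s', supported_on J c s -> supported_on J c' s' ->
      lincomb I J s c b = lincomb I J s' c' b -> forall j, c j = c' j).

Definition in_some_basis (I : Type) (v : I -> K) : Prop :=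
  exists (J : Type) (b : J -> I -> K) (j : J), is_basis I J b /\ b j = v.

Section Reps.
Variables (G : Type) (mul : G -> G -> G) (one : G).

Record is_rep (I : Type) (rho : G -> (I -> K) -> (I -> K)) : Prop := {
  rep_lin : forall g, is_linear I I (rho g);
  rep_one : forall f, fin_supp I f -> rho one f = f;
  rep_mul : forall g h f, fin_supp I f -> rho (mul g h) f = rho g (rho h f) }.

Record rep := Rep {
  rI : Type;
  ract : G -> (rI -> K) -> (rI -> K);
  ractP : is_rep rI ract }.

Definition submodule (I : Type) (U : (I -> K) -> Prop) : Prop :=
  (forall f, U f -> fin_supp I f) /\ U (vzero I) /\
  (forall f g, U f -> U g -> U (vadd I f g)) /\ (forall c f, U f -> U (vscale I c f)).

Definition G_stable (V : rep) (U : (rI V -> K) -> Prop) : Prop :=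
  forall g f, U f -> U (ract V g f).

Definition nontrivial (I : Type) (U : (I -> K) -> Prop) : Prop :=
  exists f, U f /\ f <> vzero I.

Definition direct_sum (I : Type) (U W : (I -> K) -> Prop) : Prop :=
  forall f, fin_supp I f -> exists! p : (I -> K) * (I -> K), U p.1 /\ W p.2 /\ f = vadd I p.1 p.2.

Definition indecomposable (V : rep) : Prop :=
  (exists f : rI V -> K, fin_supp (rI V) f /\ f <> vzero (rI V)) /\
  ~ (exists U W, submodule (rI V) U /\ submodule (rI V) W /\ G_stable V U /\ G_stable V W /\
                 nontrivial (rI V) U /\ nontrivial (rI V) W /\ direct_sum (rI V) U W).

Definition rep_iso_map (V W : rep) (phi : (rI V -> K) -> (rI W -> K)) : Prop :=
  is_linear (rI V) (rI W) phi /\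
  (exists psi : (rI W -> K) -> (rI V -> K), is_linear (rI W) (rI V) psi /\
     (forall f, fin_supp (rI V) f -> psi (phi f) = f) /\
     (forall f, fin_supp (rI W) f -> phi (psi f) = f)) /\
  (forall g f, fin_supp (rI V) f -> phi (ract V g f) = ract W g (phi f)).

Definition rep_iso (V W : rep) : Prop := exists phi, rep_iso_map V W phi.

Definition pair_iso (V : rep) (v : rI V -> K) (W : rep) (w : rI W -> K) : Prop :=
  exists phi, rep_iso_map V W phi /\ phi v = w.

(* pairs (H, chi) : subgroup H and homomorphism chi : H -> K^x;
   chi is given as a function on G, only its values on H matter *)
Definition is_char (H : G -> Prop) (chi : G -> K) : Prop :=
  (forall h, H h -> chi h != 0) /\
  (forall h k, H h -> H k -> chi (mul h k) = chi h * chi k).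

Variable inv : G -> G.

Definition chpair_valid (p : (G -> Prop) * (G -> K)) : Prop :=
  is_subgroup G mul one inv p.1 /\ is_char p.1 p.2.

Definition chpair_eq (p q : (G -> Prop) * (G -> K)) : Prop :=
  (forall g, p.1 g <-> q.1 g) /\ (forall h, p.1 h -> p.2 h = q.2 h).

Definition chpair_conj (p q : (G -> Prop) * (G -> K)) : Prop :=
  exists g, (forall x, q.1 x <-> p.1 (mul (inv g) (mul x g))) /\
            (forall h, q.1 h -> q.2 h = p.2 (mul (inv g) (mul h g))).
End Reps.
End Modules.

Arguments is_group {G}.
Arguments is_subgroup {G}.
Arguments rep K {G} mul one.
Arguments rI {K G mul one}.
Arguments ract {K G mul one}.
Arguments indecomposable {K G mul one}.
Arguments in_some_basis {K I}.
Arguments rep_iso {K G mul one}.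
Arguments pair_iso {K G mul one}.
Arguments chpair_valid {K G} mul one inv.
Arguments chpair_eq {K G}.
Arguments chpair_conj {K G} mul inv.

(* Main.v *)
Require Import Defs.
From mathcomp Require Import all_boot all_algebra.
Set Implicit Arguments. Unset Strict Implicit. Unset Printing Implicit Defensive.
Import GRing.Theory.
Local Open Scope ring_scope.
From Stdlib Require Import ClassicalEpsilon FunctionalExtensionality ProofIrrelevance PropExtensionality Classical.
Arguments vzero {K I}. Arguments vadd {K I}. Arguments vscale {K I}.
Arguments fin_supp {K I}. Arguments is_linear {K I J}. Arguments lincomb {K I J}.
Arguments supported_on {K J}. Arguments is_basis {K I J}.

Definition pdec (P : Prop) : {P} + {~ P} := excluded_middle_informative P.

Section A.
Variable K : comNzSemiRingType.
Hypothesis HK : semifield K.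
Hypothesis HKz : zero_sum_free K.

Lemma one_neq0 : (1 : K) != 0. Proof. exact: oner_neq0. Qed.

Lemma mul_eq0' (a b : K) : a * b = 0 -> a = 0 \/ b = 0.
Proof.
move=> H; case: (eqVneq a 0) => [->|Ha]; [by left|right].
have [y Hy] := HK Ha.
by rewrite -[b]mul1r -Hy (mulrC a) -mulrA H mulr0.
Qed.

Lemma mul_neq0' (a b : K) : a != 0 -> b != 0 -> a * b != 0.
Proof. move=> Ha Hb; apply/eqP=> /mul_eq0' [/eqP|/eqP]; by [rewrite (negbTE Ha)|rewrite (negbTE Hb)]. Qed.

Definition kinv (c : K) : K :=
  match pdec (exists y, c * y = 1) with
  | left H => proj1_sig (constructive_indefinite_description _ H)
  | right _ => 0 end.

Lemma kinvP (c : K) : c != 0 -> c * kinv c = 1.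
Proof.
move=> Hc; rewrite /kinv; case: pdec => [H|H]; last by exfalso; apply: H; exact: HK.
exact: proj2_sig (constructive_indefinite_description _ H).
Qed.

Lemma kinvP' (c : K) : c != 0 -> kinv c * c = 1.
Proof. by move=> Hc; rewrite mulrC kinvP. Qed.

Lemma kinv_neq0 (c : K) : c != 0 -> kinv c != 0.
Proof. move=> Hc; apply/eqP=> H; have := kinvP Hc; rewrite H mulr0 => /eqP; by rewrite eq_sym (negbTE one_neq0). Qed.

Lemma zsf_l (a b : K) : a + b = 0 -> a = 0. Proof. by case/HKz. Qed.
Lemma zsf_r (a b : K) : a + b = 0 -> b = 0. Proof. by case/HKz. Qed.

Section Vec.
Variable I : Type.
Implicit Types f g : I -> K.

Definition ev (i : I) : I -> K := fun k => if pdec (k = i) then 1 else 0.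

Lemma ev_self i : ev i i = 1. Proof. by rewrite /ev; case: pdec. Qed.
Lemma ev_ne i k : k <> i -> ev i k = 0. Proof. by rewrite /ev; case: pdec. Qed.

Lemma fs_ev i : fin_supp (ev i).
Proof. exists (i :: nil) => k Hk; apply: ev_ne => E; apply: Hk; left; by []. Qed.

Lemma fs_zero : fin_supp (@vzero K I). Proof. by exists nil. Qed.

Lemma fs_add f g : fin_supp f -> fin_supp g -> fin_supp (vadd f g).
Proof.
move=> [s Hs] [t Ht]; exists (s ++ t)%list => k Hk.
rewrite /vadd Hs ?Ht ?addr0 // => H; apply: Hk; apply List.in_or_app; tauto.
Qed.

Lemma fs_scale c f : fin_supp f -> fin_supp (vscale c f).
Proof. move=> [s Hs]; exists s => k Hk; by rewrite /vscale Hs ?mulr0. Qed.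

Lemma vadd0 f : vadd f vzero = f.
Proof. by apply: functional_extensionality => k; rewrite /vadd /vzero addr0. Qed.
Lemma vadd0l f : vadd vzero f = f.
Proof. by apply: functional_extensionality => k; rewrite /vadd /vzero add0r. Qed.
Lemma vscale1 f : vscale 1 f = f.
Proof. by apply: functional_extensionality => k; rewrite /vscale mul1r. Qed.
Lemma vscale0 f : vscale 0 f = vzero.
Proof. by apply: functional_extensionality => k; rewrite /vscale mul0r. Qed.
Lemma vscalez c : vscale c (@vzero K I) = vzero.
Proof. by apply: functional_extensionality => k; rewrite /vscale /vzero mulr0. Qed.
Lemma vscaleM c d f : vscale c (vscale d f) = vscale (c * d) f.
Proof. by apply: functional_extensionality => k; rewrite /vscale mulrA. Qed.
Lemma vscaleK c f : c != 0 -> vscale (kinv c) (vscale c f) = f.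
Proof. by move=> Hc; rewrite vscaleM kinvP' // vscale1. Qed.

Definition kill (f : I -> K) (x : I) : I -> K := fun k => if pdec (k = x) then 0 else f k.

Lemma kill_split f x : f = vadd (vscale (f x) (ev x)) (kill f x).
Proof.
apply: functional_extensionality => k; rewrite /vadd /vscale /kill /ev.
destruct (pdec (k = x)) as [E|E]; [by subst k; rewrite mulr1 addr0 | by rewrite mulr0 add0r].
Qed.

Lemma fs_kill f x : fin_supp f -> fin_supp (kill f x).
Proof. move=> [s Hs]; exists s => k Hk; rewrite /kill; case: pdec => //; by rewrite Hs. Qed.

Lemma fs_ind (P : (I -> K) -> Prop) :
  P vzero -> (forall c i f, fin_supp f -> P f -> P (vadd (vscale c (ev i)) f)) ->
  forall f, fin_supp f -> P f.
Proof.
move=> P0 PS f [s]; elim: s f => [|x s IH] f Hf.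
  have -> : f = vzero by apply: functional_extensionality => k; apply: Hf.
  exact: P0.
rewrite (kill_split f x); apply: PS.
  exists (x :: s) => k Hk; rewrite /kill; destruct (pdec (k = x)) => //; exact: Hf.
apply: IH => k Hk; rewrite /kill; destruct (pdec (k = x)) as [|Hx] => //; apply: Hf; case => // E; by case: Hx.
Qed.

Lemma nz_coord (f : I -> K) : f <> vzero -> exists k, f k != 0.
Proof.
move=> Hf; apply: NNPP => H; apply: Hf; apply: functional_extensionality => k.
case: (eqVneq (f k) 0) => // Hk; exfalso; apply: H; by exists k.
Qed.

Lemma ev_neq0 i : ev i <> vzero.
Proof. move=> H; have := ev_self i; rewrite H /vzero => /eqP; by rewrite eq_sym (negbTE one_neq0). Qed.

Lemma e_inj (c d : K) i j : c != 0 -> vscale c (ev i) = vscale d (ev j) -> i = j.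
Proof.
move=> Hc H; apply: NNPP => Hij; have := congr1 (fun f => f i) H.
rewrite /vscale ev_self ev_ne // mulr1 mulr0 => /eqP; by rewrite (negbTE Hc).
Qed.

Lemma e_scal (c d : K) i j : c != 0 -> vscale c (ev i) = vscale d (ev j) -> c = d.
Proof.
move=> Hc H; have E := e_inj Hc H; subst j.
by have := congr1 (fun f => f i) H; rewrite /vscale ev_self !mulr1.
Qed.

Lemma supp1 (f : I -> K) i : (forall k, k <> i -> f k = 0) -> f = vscale (f i) (ev i).
Proof.
move=> H; apply: functional_extensionality => k; rewrite /vscale /ev.
destruct (pdec (k = i)) as [E|E]; [by subst k; rewrite mulr1 | by rewrite H // mulr0].
Qed.

End Vec.

Section Lin.
Variables (I J : Type) (A : (I -> K) -> (J -> K)).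
Implicit Types f g : I -> K.
Hypothesis HA : is_linear A.

Lemma lin_fs f : fin_supp f -> fin_supp (A f). Proof. by case: HA => H _; apply: H. Qed.
Lemma lin_add f g : fin_supp f -> fin_supp g -> A (vadd f g) = vadd (A f) (A g).
Proof. by case: HA => _ [H _]; apply: H. Qed.
Lemma lin_scale c f : fin_supp f -> A (vscale c f) = vscale c (A f).
Proof. by case: HA => _ [_ H]; apply: H. Qed.
Lemma lin_zero : A vzero = vzero.
Proof. by rewrite -(vscale0 vzero) lin_scale ?vscale0 //; apply: fs_zero. Qed.
End Lin.

Lemma lin_ext I J (A B : (I -> K) -> (J -> K)) : is_linear A -> is_linear B ->
  (forall i, A (ev i) = B (ev i)) -> forall f, fin_supp f -> A f = B f.
Proof.
move=> HA HB H; apply: fs_ind; first by rewrite !lin_zero.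
move=> c i f Hf IH.
have Hs : fin_supp (vscale c (ev i)) by apply/fs_scale/fs_ev.
by rewrite !(lin_add _ Hs Hf) // !lin_scale ?H ?IH //; apply: fs_ev.
Qed.

Lemma lin_comp I J L (A : (I -> K) -> (J -> K)) (B : (J -> K) -> (L -> K)) :
  is_linear A -> is_linear B -> is_linear (fun f => B (A f)).
Proof.
move=> HA HB; split; [|split].
- by move=> f Hf; apply: lin_fs => //; apply: lin_fs.
- by move=> f g Hf Hg; rewrite lin_add // lin_add //; apply: lin_fs.
- by move=> c f Hf; rewrite lin_scale // lin_scale //; apply: lin_fs.
Qed.

Lemma lin_id I : is_linear (fun f : I -> K => f).
Proof. by split; [|split]. Qed.

Lemma mono I J (A : (I -> K) -> (J -> K)) (B : (J -> K) -> (I -> K)) :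
  is_linear A -> is_linear B -> (forall f, fin_supp f -> B (A f) = f) ->
  (forall f, fin_supp f -> A (B f) = f) ->
  forall i, exists j c, c != 0 /\ A (ev i) = vscale c (ev j).
Proof.
move=> HA HB BA AB i.
set u := A (ev i).
have Hu : fin_supp u by apply: lin_fs => //; apply: fs_ev.
have u0 : u <> vzero.
  move=> E; have := BA _ (fs_ev i); rewrite -/u E lin_zero //; exact/nesym/ev_neq0.
have [k Hk] := nz_coord u0.
have Ek : ev i = vadd (vscale (u k) (B (ev k))) (B (kill u k)).
  rewrite -(BA _ (fs_ev i)) -/u {1}(kill_split u k) lin_add //.
  - by rewrite lin_scale //; apply: fs_ev.
  - by apply/fs_scale/fs_ev.
  - exact: fs_kill.
have Bk : B (ev k) = vscale (B (ev k) i) (ev i).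
  apply: supp1 => m Hm; have := congr1 (fun f => f m) Ek.
  rewrite /vadd /vscale ev_ne // => /esym/zsf_l/mul_eq0' [|//].
  by move/eqP; rewrite (negbTE Hk).
have mu0 : B (ev k) i != 0.
  apply/eqP=> E; have := AB _ (fs_ev k); rewrite Bk E vscale0 lin_zero //.
  exact/nesym/ev_neq0.
set mu := B (ev k) i in Bk mu0 *.
have E : vscale mu u = ev k.
  have := AB _ (fs_ev k); rewrite {1}Bk lin_scale //; exact: fs_ev.
exists k, (kinv mu); split; first exact: kinv_neq0.
by rewrite -E vscaleK.
Qed.

End A.

Unset Implicit Arguments.
Arguments ractP {K G mul one}. Arguments rep_iso_map {K G mul one}. Arguments G_stable {K G mul one}.
Arguments submodule {K I}. Arguments nontrivial {K I}. Arguments direct_sum {K I}.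
Ltac pcase := match goal with |- context [pdec ?P] => let H := fresh in destruct (pdec P) as [H|H]; revert H end.
Section B.
Variables (G : Type) (mul : G -> G -> G) (one : G) (inv : G -> G).
Hypothesis HG : is_group mul one inv.
Variable K : comNzSemiRingType.
Hypothesis HK : semifield K.
Hypothesis HKz : zero_sum_free K.

Lemma mulgA x y z : mul x (mul y z) = mul (mul x y) z. Proof. by case: HG. Qed.
Lemma mul1g x : mul one x = x. Proof. by case: HG. Qed.
Lemma mulVg x : mul (inv x) x = one. Proof. by case: HG. Qed.
Lemma mulgV x : mul x (inv x) = one.
Proof.
by rewrite -[mul x _]mul1g -{1}(mulVg (inv x)) -mulgA (mulgA (inv x) x) mulVg mul1g mulVg.
Qed.
Lemma mulg1 x : mul x one = x.
Proof. by rewrite -(mulVg x) mulgA mulgV mul1g. Qed.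
Lemma mulKg x y : mul (inv x) (mul x y) = y. Proof. by rewrite mulgA mulVg mul1g. Qed.
Lemma mulKVg x y : mul x (mul (inv x) y) = y. Proof. by rewrite mulgA mulgV mul1g. Qed.

Section Rep.
Variable V : rep K mul one.
Notation I := (rI V).
Notation rho := (ract V).
Implicit Types f : I -> K.

Lemma rlin g : is_linear (rho g). Proof. by case: (ractP V). Qed.
Lemma rone f : fin_supp f -> rho one f = f. Proof. by case: (ractP V) => _ H _; apply: H. Qed.
Lemma rmul g h f : fin_supp f -> rho (mul g h) f = rho g (rho h f). Proof. by case: (ractP V) => _ _ H; apply: H. Qed.
Lemma rfs g f : fin_supp f -> fin_supp (rho g f). Proof. move=> Hf. exact: (lin_fs (rlin g) Hf). Qed.
Lemma rscale g c f : fin_supp f -> rho g (vscale c f) = vscale c (rho g f). Proof. by move=> Hf; rewrite (lin_scale (rlin g)). Qed.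
Lemma rzero g : rho g vzero = vzero. Proof. exact: lin_zero (rlin g). Qed.
Lemma rVK g f : fin_supp f -> rho (inv g) (rho g f) = f.
Proof. by move=> Hf; rewrite -rmul // mulVg rone. Qed.
Lemma rKV g f : fin_supp f -> rho g (rho (inv g) f) = f.
Proof. by move=> Hf; rewrite -rmul // mulgV rone. Qed.
Lemma rmono g i : exists j c, c != 0 /\ rho g (ev K i) = vscale c (ev K j).
Proof. apply: (mono HK HKz (rlin g) (rlin (inv g))) => f Hf; [exact: rVK | exact: rKV]. Qed.
Lemma rnz g f : fin_supp f -> f <> vzero -> rho g f <> vzero.
Proof. by move=> Hf H E; apply: H; rewrite -(rVK g f Hf) E rzero. Qed.

Definition stab (v : I -> K) : G -> Prop := fun g => exists c, rho g v = vscale c v.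
Definition chr (v : I -> K) : G -> K := fun g =>
  match pdec (stab v g) with
  | left H => proj1_sig (constructive_indefinite_description _ H)
  | right _ => 0 end.
Lemma chrP v g : stab v g -> rho g v = vscale (chr v g) v.
Proof.
rewrite /chr => H; case: pdec => [H'|//].
exact: proj2_sig (constructive_indefinite_description _ H').
Qed.
End Rep.
Arguments rlin {V}. Arguments rone {V}. Arguments rmul {V}. Arguments rfs {V}.
Arguments rscale {V}. Arguments rzero {V}. Arguments rVK {V}. Arguments rKV {V}.
Arguments rmono {V}. Arguments chrP {V}. Arguments rnz {V}.

Lemma scal_uniq I (v : I -> K) c d : v <> vzero -> vscale c v = vscale d v -> c = d.
Proof.
move=> /nz_coord [k Hk] E; have := congr1 (fun f => f k * kinv (v k)) E.
by rewrite /vscale -!mulrA !(kinvP HK) // !mulr1.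
Qed.

Lemma stab_nz (V : rep K mul one) v g c : fin_supp v -> v <> vzero ->
  ract V g v = vscale c v -> c != 0.
Proof.
move=> Hv Hnz E; apply/eqP => c0; apply: (rnz g v Hv Hnz); by rewrite E c0 vscale0.
Qed.

Lemma chr_eq (V : rep K mul one) v g c : fin_supp v -> v <> vzero ->
  ract V g v = vscale c v -> chr V v g = c.
Proof.
move=> Hv Hnz E; have S : stab V v g by exists c.
by apply: (scal_uniq _ v) => //; rewrite -chrP.
Qed.

Definition Phi (V : rep K mul one) (v : rI V -> K) := (stab V v, chr V v).

Lemma Phi_valid (V : rep K mul one) v : fin_supp v -> v <> vzero ->
  chpair_valid mul one inv (Phi V v).
Proof.
move=> Hv Hnz; split; [split; [|split]|split] => /=.
- by exists 1; rewrite rone // vscale1.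
- move=> x y [c Hc] [d Hd]; exists (d * c).
  by rewrite rmul // Hd rscale // Hc vscaleM.
- move=> x [c Hc]; have c0 := stab_nz V v x c Hv Hnz Hc.
  exists (kinv c); have := rVK x v Hv; rewrite Hc rscale ?rfs // => E.
  by rewrite -{2}E (vscaleK HK).
- move=> h Sh; have E := chrP v h Sh; exact: stab_nz V v h _ Hv Hnz E.
- move=> h k Sh Sk; apply: chr_eq => //.
  by rewrite rmul // (chrP v k Sk) rscale // (chrP v h Sh) vscaleM mulrC.
Qed.

Lemma iso_Phi (V W : rep K mul one) phi v w : rep_iso_map V W phi -> phi v = w ->
  fin_supp v -> v <> vzero -> chpair_eq (Phi V v) (Phi W w).
Proof.
move=> [Hl [[psi [Hpsi [PP PP']]] Heq]] Hw Hv Hnz.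
have Hwf : fin_supp w by rewrite -Hw; apply: (lin_fs Hl Hv).
have Hwnz : w <> vzero by move=> E; apply: Hnz; rewrite -(PP v Hv) Hw E (lin_zero Hpsi).
have fw : forall g c, ract V g v = vscale c v -> ract W g w = vscale c w.
  by move=> g c E; rewrite -Hw -Heq // E (lin_scale Hl).
have bw : forall g c, ract W g w = vscale c w -> ract V g v = vscale c v.
  move=> g c E; rewrite -(PP _ (rfs g v Hv)) Heq // Hw E (lin_scale Hpsi) // -Hw PP //.
split => /=.
- by move=> g; split => -[c Hc]; exists c; [apply: fw|apply: bw].
- move=> h Sh; symmetry; apply: chr_eq => //; apply: fw; exact: chrP.
Qed.

Section RepC.
Variable V : rep K mul one.
Notation I := (rI V).
Notation rho := (ract V).
Notation e := (ev K).
Implicit Types f : I -> K.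
Implicit Types U W X Y : (I -> K) -> Prop.

Lemma inv_move g a b c : c != 0 -> rho g (e a) = vscale c (e b) ->
  rho (inv g) (e b) = vscale (kinv c) (e a).
Proof.
move=> Hc E; have := rVK g (e a) (fs_ev _ a); rewrite E rscale; last exact: fs_ev.
by move=> E'; rewrite -E' (vscaleK HK).
Qed.

Lemma supp_img x f : fin_supp f -> forall k, rho x f k != 0 ->
  exists m, f m != 0 /\ rho x (e m) k != 0.
Proof.
move: f; apply: fs_ind.
  by move=> k; rewrite rzero /vzero eqxx.
move=> c i f Hf IH k.
have Hs : fin_supp (vscale c (e i)) by apply/fs_scale/fs_ev.
rewrite (lin_add (rlin x) Hs Hf) (rscale x c (e i) (fs_ev _ i)) /vadd /vscale.
case: (eqVneq (rho x f k) 0) => [E0|Hn].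
- rewrite E0 addr0 => H.
  have c0 : c != 0 by apply/eqP => c0; move: H; rewrite c0 mul0r eqxx.
  have r0 : rho x (e i) k != 0 by apply/eqP => r0; move: H; rewrite r0 mulr0 eqxx.
  exists i; split => //; rewrite ev_self mulr1; apply/eqP => /(zsf_l HKz) E1.
  by move: c0; rewrite E1 eqxx.
- move=> _; have [m [Hm1 Hm2]] := IH k Hn; exists m; split => //.
  apply/eqP => /(zsf_r HKz) E1; by move: Hm1; rewrite E1 eqxx.
Qed.

Lemma mono_at x m k : rho x (e m) k != 0 ->
  exists d, d != 0 /\ rho x (e m) = vscale d (e k).
Proof.
have [j [d [Hd E]]] := rmono x m; rewrite E => H; exists d; split => //.
suff -> : j = k by [].
apply: NNPP => Hjk; move: H; by rewrite /vscale ev_ne ?mulr0 ?eqxx // => E'; apply: Hjk.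
Qed.

Definition orb i0 k := exists g c, c != 0 /\ rho g (e i0) = vscale c (e k).
Definition trans := forall i k, orb i k.

Lemma orb_refl i : orb i i.
Proof. exists one, 1; split; first exact: one_neq0. by rewrite rone ?vscale1 //; apply: fs_ev. Qed.

Lemma orb_trans {i j k} : orb i j -> orb j k -> orb i k.
Proof.
move=> [g [c [Hc Eg]]] [h [d [Hd Eh]]]; exists (mul h g), (c * d); split.
  exact: mul_neq0'.
by rewrite rmul ?Eg ?rscale ?Eh ?vscaleM ?(mulrC d) //; apply: fs_ev.
Qed.

Lemma orb_sym {i j} : orb i j -> orb j i.
Proof.
move=> [g [c [Hc Eg]]]; exists (inv g), (kinv c); split; first exact: kinv_neq0.
exact: inv_move.
Qed.

Definition restr (P : I -> Prop) f : I -> K := fun k => if pdec (P k) then f k else 0.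

Lemma fs_restr P f : fin_supp f -> fin_supp (restr P f).
Proof. move=> [s Hs]; exists s => k Hk; rewrite /restr; pcase; move=> Pk //; exact: Hs. Qed.

Lemma indec_trans : indecomposable V -> trans.
Proof.
move=> [[f0 [Hf0 Hnz0]] Hnd].
have [i0 _] := nz_coord Hnz0.
pose O := orb i0.
pose U := fun f => fin_supp f /\ forall k, f k != 0 -> O k.
pose W := fun f => fin_supp f /\ forall k, f k != 0 -> ~ O k.
have addnz : forall (a b : K), a + b != 0 -> a != 0 \/ b != 0.
  move=> a b H; case: (eqVneq a 0) => [a0|]; last by left.
  by right; move: H; rewrite a0 add0r.
have sclnz : forall (a b : K), a * b != 0 -> b != 0.
  by move=> a b H; apply/eqP => b0; move: H; rewrite b0 mulr0 eqxx.
have smU : submodule U.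
  split; [by move=> f []|split; [|split]].
  - by split; [exact: fs_zero | move=> k; rewrite /vzero eqxx].
  - move=> f g [Hf Uf] [Hg Ug]; split; first exact: fs_add.
    by move=> k /addnz [/Uf|/Ug].
  - move=> c f [Hf Uf]; split; first exact: fs_scale.
    by move=> k /sclnz /Uf.
have smW : submodule W.
  split; [by move=> f []|split; [|split]].
  - by split; [exact: fs_zero | move=> k; rewrite /vzero eqxx].
  - move=> f g [Hf Uf] [Hg Ug]; split; first exact: fs_add.
    by move=> k /addnz [/Uf|/Ug].
  - move=> c f [Hf Uf]; split; first exact: fs_scale.
    by move=> k /sclnz /Uf.
have stU : G_stable V U.
  move=> x f [Hf Uf]; split; first exact: rfs.
  move=> k /(supp_img x f Hf k) [m [/Uf Om /mono_at [d [Hd Ed]]]].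
  apply: orb_trans Om _; exists x, d; split => //.
have stW : G_stable V W.
  move=> x f [Hf Uf]; split; first exact: rfs.
  move=> k /(supp_img x f Hf k) [m [Hm /mono_at [d [Hd Ed]]]] Ok.
  apply: (Uf m Hm); apply: orb_trans Ok _; apply: orb_sym; exists x, d; split => //.
have ntU : nontrivial U.
  exists (e i0); split; last exact: ev_neq0.
  split; first exact: fs_ev.
  move=> k; destruct (pdec (k = i0)) as [Hk|Hk]; first by subst k; move=> _; exact: orb_refl.
  by rewrite ev_ne ?eqxx.
have dsUW : direct_sum U W.
  move=> f Hf; exists (restr O f, restr (fun k => ~ O k) f); split.
    split; [split; [exact: fs_restr|]|split; [split; [exact: fs_restr|]|]].
    - by move=> k /=; rewrite /restr; pcase; move=> Hk //; rewrite eqxx.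
    - by move=> k /=; rewrite /restr; pcase; move=> Hk //; rewrite eqxx.
    - apply: functional_extensionality => k /=; rewrite /vadd /restr.
      by pcase; move=> Ok; pcase; move=> Ok' //; rewrite ?addr0 ?add0r.
  move=> [u w] /= [[Hu Uu] [[Hw Ww] Ef]].
  have Eu : forall k, O k -> w k = 0.
    by move=> k Ok; case: (eqVneq (w k) 0) => // /Ww.
  have Ew : forall k, ~ O k -> u k = 0.
    by move=> k Ok; case: (eqVneq (u k) 0) => // /Uu.
  congr pair; apply: functional_extensionality => k; rewrite /restr Ef /vadd;
  pcase; move=> Ok;
  by [rewrite (Eu k Ok) addr0 | rewrite (Ew k Ok) | rewrite (Ew k Ok) add0r | rewrite (Eu k (NNPP _ Ok))].
have Oall : forall j, O j.
  move=> j; apply: NNPP => Oj; apply: Hnd; exists U, W; do 6 (split => //).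
  exists (e j); split; last exact: ev_neq0.
  split; first exact: fs_ev.
  move=> m; destruct (pdec (m = j)) as [Hm|Hm]; [by subst m | by rewrite ev_ne ?eqxx].
move=> i k; exact: orb_trans (orb_sym (Oall i)) (Oall k).
Qed.

Lemma ds_inter U W : direct_sum U W -> submodule U -> submodule W ->
  forall f, U f -> W f -> f = vzero.
Proof.
move=> ds [fsU [U0 _]] [fsW [W0 _]] f Uf Wf.
have [[u w] [_ Hu]] := ds f (fsU f Uf).
have E1 := Hu (f, vzero) (conj Uf (conj W0 (esym (vadd0 f)))).
have E2 := Hu (vzero, f) (conj U0 (conj Wf (esym (vadd0l f)))).
rewrite E2 in E1; by case: E1 => _ ->.
Qed.

Lemma ds_split U W : direct_sum U W -> submodule U -> submodule W ->
  forall i, U (e i) \/ W (e i).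
Proof.
move=> ds [fsU [U0 [Uadd Usc]]] _ i.
have [[u w] [[/= Uu [Ww Ei]] _]] := ds (e i) (fs_ev _ i).
have Eu : u = vscale (u i) (e i).
  apply: supp1 => k Hk; have := congr1 (fun f => f k) Ei.
  by rewrite /vadd ev_ne // => /esym/(zsf_l HKz).
case: (eqVneq (u i) 0) => [u0|un0].
- right; suff -> : e i = w by [].
  by rewrite Ei Eu u0 vscale0 vadd0l.
- left; have := Usc (kinv (u i)) u Uu; rewrite {2}Eu (vscaleK HK) //.
Qed.

Lemma key X Y : submodule X -> submodule Y -> G_stable V X -> nontrivial Y ->
  (forall f, X f -> Y f -> f = vzero) -> trans -> forall i, X (e i) -> False.
Proof.
move=> [fsX [X0 [Xadd Xsc]]] [fsY _] stX [f [Yf fnz]] inter Ht i Xi.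
have Xe : forall k, X (e k).
  move=> k; have [g [c [Hc E]]] := Ht i k.
  have := Xsc (kinv c) _ (stX g _ Xi); by rewrite E (vscaleK HK).
have Xall : forall f, fin_supp f -> X f.
  apply: fs_ind => // c k f' _ Xf'; apply: Xadd => //; exact: Xsc.
by apply: fnz; apply: inter => //; apply: Xall; apply: fsY.
Qed.


Lemma trans_indec : (exists i : I, True) -> trans -> indecomposable V.
Proof.
move=> [i0 _] Ht; split.
  by exists (e i0); split; [exact: fs_ev | exact: ev_neq0].
move=> [U [W [smU [smW [stU [stW [ntU [ntW ds]]]]]]]].
case: (ds_split U W ds smU smW i0) => Hi.
- apply: (key U W smU smW stU ntW _ Ht i0 Hi); exact: ds_inter.
- apply: (key W U smW smU stW ntU _ Ht i0 Hi) => f Wf Uf.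
  exact: (ds_inter U W ds smU smW f Uf Wf).
Qed.

End RepC.

Section Basis.
Variable I : Type.
Notation e := (@ev K I).
Implicit Types f : I -> K.

Lemma lincomb_ev (s : list I) c : List.NoDup s ->
  lincomb s c e = fun k => if pdec (List.In k s) then c k else 0.
Proof.
elim: s => [|x s IH] /=.
  by move=> _; apply: functional_extensionality => k; pcase.
move=> /List.NoDup_cons_iff [Hx Hs]; rewrite IH //.
apply: functional_extensionality => k; rewrite /vadd /vscale.
destruct (pdec (k = x)) as [Ek|Ek].
- subst k; rewrite ev_self mulr1; pcase; move=> H1; pcase; move=> H2 //;
  try (exfalso; by [apply: Hx | apply: H2; left]).
  by rewrite addr0.
- rewrite (ev_ne K Ek) mulr0 add0r; have Ek' := nesym Ek; pcase; move=> H1; pcase; move=> H2 //.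
  all: try (exfalso; tauto).
Qed.

Lemma nodup_cover (s : list I) : exists s', List.NoDup s' /\ forall k, List.In k s -> List.In k s'.
Proof.
elim: s => [|x s [s' [Hn Hc]]]; first by exists nil; split => //; constructor.
destruct (pdec (List.In x s')) as [Hx|Hx].
- exists s'; split => // k [<-|/Hc] //.
- exists (x :: s'); split; first by constructor.
  move=> k [<-|/Hc]; [left|right] => //.
Qed.

Lemma basis_ev : is_basis e.
Proof.
split; first exact: fs_ev.
split.
- move=> f [s Hs]; have [s' [Hn Hc]] := nodup_cover s.
  exists f, s'; split.
    split => // j Hj; apply: Hs => /Hc; tauto.
  rewrite lincomb_ev //; apply: functional_extensionality => k; pcase; move=> H //.
  by rewrite Hs // => /Hc.
- move=> c s c' s' [Hn Hz] [Hn' Hz'] E j; have := congr1 (fun f => f j) E.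
  rewrite !lincomb_ev //; pcase; move=> H1; pcase; move=> H2 //.
  + by rewrite (Hz' j H2).
  + by rewrite (Hz j H1).
  + by rewrite (Hz j H1) (Hz' j H2).
Qed.

Lemma in_basis_ev i : in_some_basis (e i).
Proof. exists I, e, i; split => //; exact: basis_ev. Qed.

Section LC.
Variables (J : Type) (b : J -> I -> K).

Lemma lc_zero s c : (forall j, List.In j s -> c j = 0) -> lincomb s c b = vzero.
Proof.
elim: s => [|x s IH] //= H; rewrite IH; last by move=> j Hj; apply: H; right.
by rewrite H ?vscale0 ?vadd0; last by left.
Qed.

Lemma lc_at_zero s c m : lincomb s c b m = 0 -> forall j, List.In j s -> c j * b j m = 0.
Proof.
elim: s => [|x s IH] //= H j [<-|Hj].
- by move: H; rewrite /vadd /vscale => /(zsf_l HKz).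
- by apply: IH => //; move: H; rewrite /vadd /vscale => /(zsf_r HKz).
Qed.

Lemma lc_eqon s c d : (forall j, List.In j s -> c j = d j) -> lincomb s c b = lincomb s d b.
Proof.
elim: s => [|x s IH] //= H; rewrite IH; last by move=> j Hj; apply: H; right.
by rewrite H //; left.
Qed.

Lemma lc_add s c d : lincomb s (fun j => c j + d j) b = vadd (lincomb s c b) (lincomb s d b).
Proof.
elim: s => [|x s IH] /=; first by rewrite vadd0.
rewrite IH; apply: functional_extensionality => k; rewrite /vadd /vscale mulrDl.
by rewrite -!addrA (addrCA (d x * _)).
Qed.

Lemma lc_delta s x a : List.NoDup s -> List.In x s ->
  lincomb s (fun j => if pdec (j = x) then a else 0) b = vscale a (b x).
Proof.
elim: s => [|y s IH] //= /List.NoDup_cons_iff [Hy Hs] [Exy|Hx].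
- subst y; rewrite lc_zero.
    by pcase; move=> H //; rewrite vadd0.
  by move=> j Hj; pcase; move=> H //; subst j.
- rewrite IH //; pcase; move=> H; first by subst y.
  by rewrite vscale0 vadd0l.
Qed.
End LC.

Lemma basis_char (v : I -> K) : in_some_basis v -> exists i a, a != 0 /\ v = vscale a (e i).
Proof.
move=> [J [b [j [[Hb [Hspan Huniq]] Ev]]]].
pose dl x := fun y : J => if pdec (y = x) then (1 : K) else 0.
have supd : forall x, supported_on (dl x) (x :: nil).
  move=> x; split; first by constructor; [move=> [] | constructor].
  by move=> y Hy; rewrite /dl; pcase; move=> H //; subst y; case: Hy; left.
have lcd : forall x, lincomb (x :: nil) (dl x) b = b x.
  by move=> x /=; rewrite /dl; pcase; move=> H //; rewrite vscale1 vadd0.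
have H0 : supported_on (fun _ : J => (0:K)) nil by split; [constructor | by []].
have bnz : forall x, b x <> vzero.
  move=> x E.
  have L : lincomb (x :: nil) (dl x) b = lincomb nil (fun _ => 0) b by rewrite lcd E.
  move: (Huniq _ _ _ _ (supd x) H0 L x); rewrite /dl; pcase; move=> H; last by [].
  move/eqP; by rewrite (negbTE (one_neq0 K)).
have Hv : fin_supp v by rewrite -Ev.
have vnz : v <> vzero by rewrite -Ev.
have [k vk] := nz_coord vnz.
have [c [s [[Hns Hzs] Eek]]] := Hspan (e k) (fs_ev K k).
have [j' [Hj's cj']] : exists j', List.In j' s /\ c j' != 0.
  apply: NNPP => H; apply: (@ev_neq0 K I k); rewrite Eek; apply: lc_zero => x Hx.
  case: (eqVneq (c x) 0) => // Hc; exfalso; apply: H; by exists x.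
pose mu := b j' k.
have Ebj : b j' = vscale mu (e k).
  apply: supp1 => m Hm.
  have : lincomb s c b m = 0 by rewrite -Eek ev_ne.
  move=> /(lc_at_zero _ b s c m) /(_ j' Hj's) /(mul_eq0' HK) [c0|//].
  by move: cj'; rewrite c0 eqxx.
have mu0 : mu != 0.
  apply/eqP => m0; apply: (bnz j'); by rewrite Ebj m0 vscale0.
destruct (pdec (j = j')) as [Ej|Nj].
  by exists k, mu; split => //; rewrite -Ev Ej.
exfalso.
set v' := kill v k.
have [c2 [s2 [[Hn2 Hz2] Ev']]] := Hspan v' (fs_kill k Hv).
pose a := v k * kinv mu.
have a0 : a != 0 := mul_neq0' HK vk (kinv_neq0 HK mu0).
pose c3 := fun x => c2 x + (if pdec (x = j') then a else 0).
have Hsum : vadd v' (vscale a (b j')) = v.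
  rewrite Ebj vscaleM /a -mulrA (kinvP' HK mu0) mulr1.
  rewrite [in RHS](kill_split v k); apply: functional_extensionality => x.
  by rewrite /vadd addrC.
have [s3 [Hsup3 Hlc3]] : exists s3, supported_on c3 s3 /\ lincomb s3 c3 b = v.
  destruct (pdec (List.In j' s2)) as [Hin|Hnin].
  - exists s2; split.
    + split => // x Hx; rewrite /c3 Hz2 //; pcase; move=> H; first by subst x.
      by rewrite addr0.
    + by rewrite /c3 lc_add lc_delta // -Ev' Hsum.
  - exists (j' :: s2); split.
    + split; first by constructor.
      move=> x Hx; rewrite /c3 Hz2; last by move=> H; apply: Hx; right.
      pcase; move=> H; [subst x; case: Hx; left | by rewrite addr0] => //.
    + rewrite /= (lc_eqon _ b s2 c3 c2); last first.
        by move=> x Hx; rewrite /c3; pcase; move=> H; [subst x | rewrite addr0].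
      rewrite -Ev' /c3 Hz2 // add0r; pcase; move=> H //.
      rewrite -[in RHS]Hsum; apply: functional_extensionality => x.
      by rewrite /vadd addrC.
have L : lincomb (j :: nil) (dl j) b = lincomb s3 c3 b by rewrite lcd Ev Hlc3.
move: (Huniq _ _ _ _ (supd j) Hsup3 L j'); rewrite /dl /c3.
destruct (pdec (j' = j)) as [H1|H1]; first by subst j'.
destruct (pdec (j' = j')) as [H2|H2]; last by [].
move=> /esym /(zsf_r HKz) E; by move: a0; rewrite E eqxx.
Qed.

End Basis.

Section Build.
Variables V W : rep K mul one.
Notation IV := (rI V).
Notation IW := (rI W).
Notation rho := (ract V).
Notation tau := (ract W).
Variables (v : IV -> K) (w : IW -> K) (i0 : IV) (a : K) (j0 : IW) (b0 : K).
Hypotheses (Ha : a != 0) (Ev : v = vscale a (ev K i0)) (Hb : b0 != 0) (Ew : w = vscale b0 (ev K j0)).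
Hypothesis HtV : trans V.
Hypothesis Hst1 : forall h c, rho h v = vscale c v -> tau h w = vscale c w.
Hypothesis Hst2 : forall h c, tau h w = vscale c w -> rho h v = vscale c v.

Let Hv : fin_supp v. Proof. by rewrite Ev; apply/fs_scale/fs_ev. Qed.
Let Hw : fin_supp w. Proof. by rewrite Ew; apply/fs_scale/fs_ev. Qed.

Let ex1 : forall i, { p : G * K | p.2 != 0 /\ rho p.1 v = vscale p.2 (ev K i) }.
Proof.
move=> i; apply: constructive_indefinite_description.
have [g [c [Hc E]]] := HtV i0 i.
exists (g, a * c); split; first exact: mul_neq0'.
by rewrite /= Ev rscale ?E ?vscaleM //; apply: fs_ev.
Qed.
Let gi i := (proj1_sig (ex1 i)).1.
Let lam i := (proj1_sig (ex1 i)).2.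
Let lamP i : lam i != 0. Proof. exact: (proj2_sig (ex1 i)).1. Qed.
Let giP i : rho (gi i) v = vscale (lam i) (ev K i). Proof. exact: (proj2_sig (ex1 i)).2. Qed.

Let ex2 : forall i, { p : IW * K | p.2 != 0 /\ tau (gi i) w = vscale p.2 (ev K p.1) }.
Proof.
move=> i; apply: constructive_indefinite_description.
have [j [d [Hd E]]] := @rmono W (gi i) j0.
exists (j, b0 * d); split; first exact: mul_neq0'.
by rewrite /= Ew rscale ?E ?vscaleM //; apply: fs_ev.
Qed.
Let sg i := (proj1_sig (ex2 i)).1.
Let kap i := (proj1_sig (ex2 i)).2.
Let kapP i : kap i != 0. Proof. exact: (proj2_sig (ex2 i)).1. Qed.
Let sgP i : tau (gi i) w = vscale (kap i) (ev K (sg i)). Proof. exact: (proj2_sig (ex2 i)).2. Qed.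

Let rho_inv_e i : rho (inv (gi i)) (ev K i) = vscale (kinv (lam i)) v.
Proof.
have := rVK (gi i) v Hv; rewrite giP rscale; last exact: fs_ev.
by move=> E; rewrite -E (vscaleK HK) //.
Qed.

Let tau_inv_e i : tau (inv (gi i)) (ev K (sg i)) = vscale (kinv (kap i)) w.
Proof.
have := rVK (gi i) w Hw; rewrite sgP rscale; last exact: fs_ev.
by move=> E; rewrite -E (vscaleK HK) //.
Qed.

Let sg_inj i i' : sg i = sg i' -> i = i'.
Proof.
move=> E.
pose x := mul (inv (gi i)) (gi i').
have Tx : tau x w = vscale (kap i' * kinv (kap i)) w.
  rewrite rmul // sgP rscale; last exact: fs_ev.
  by rewrite -E tau_inv_e vscaleM mulrC.
have Rx := Hst2 _ _ Tx.
have : rho (gi i') v = rho (gi i) (rho x v) by rewrite -rmul // /x mulKVg.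
rewrite Rx rscale // giP giP vscaleM => /esym E'.
by apply: (e_inj (mul_neq0' HK (mul_neq0' HK (kapP i') (kinv_neq0 HK (kapP i))) (lamP i)) E').
Qed.

Let al i := kap i * kinv (lam i).

Definition phi0 (f : IV -> K) : IW -> K := fun j =>
  match pdec (exists i, sg i = j) with
  | left H => f (proj1_sig (constructive_indefinite_description _ H)) * al (proj1_sig (constructive_indefinite_description _ H))
  | right _ => 0 end.

Let phi_at f i : phi0 f (sg i) = f i * al i.
Proof.
rewrite /phi0; case: pdec => [H|H]; last by exfalso; apply: H; exists i.
case: (constructive_indefinite_description _ H) => i' /= /sg_inj -> //.
Qed.

Let phi_out f j : ~ (exists i, sg i = j) -> phi0 f j = 0.
Proof. by rewrite /phi0; case: pdec. Qed.

Let phi_lin : is_linear phi0.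
Proof.
split; [|split].
- move=> f [s Hs]; exists (map sg s) => j Hj.
  destruct (pdec (exists i, sg i = j)) as [[i Ei]|H]; last by rewrite phi_out.
  subst j; rewrite phi_at Hs ?mul0r // => Hi; apply: Hj; exact: List.in_map.
- move=> f g _ _; apply: functional_extensionality => j; rewrite /vadd.
  destruct (pdec (exists i, sg i = j)) as [[i Ei]|H]; last by rewrite !phi_out ?addr0.
  by subst j; rewrite !phi_at mulrDl.
- move=> c f _; apply: functional_extensionality => j; rewrite /vscale.
  destruct (pdec (exists i, sg i = j)) as [[i Ei]|H]; last by rewrite !phi_out ?mulr0.
  by subst j; rewrite !phi_at mulrA.
Qed.

Let phi_e i : phi0 (ev K i) = vscale (al i) (ev K (sg i)).
Proof.
apply: functional_extensionality => j; rewrite /vscale.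
destruct (pdec (exists i, sg i = j)) as [[i' Ei]|H].
- subst j; rewrite phi_at; destruct (pdec (i' = i)) as [E|E].
  + by subst i'; rewrite !ev_self mul1r mulr1.
  + rewrite ev_ne // ev_ne ?mul0r ?mulr0 //; by move/sg_inj.
- rewrite phi_out // ev_ne ?mulr0 // => E; apply: H; by exists i.
Qed.

Let phi_gi i : phi0 (rho (gi i) v) = tau (gi i) w.
Proof.
rewrite giP (lin_scale phi_lin); last exact: fs_ev.
by rewrite phi_e vscaleM sgP /al mulrCA (kinvP HK) ?mulr1.
Qed.

Let phi_orbit x : phi0 (rho x v) = tau x w.
Proof.
have [i' [d [Hd Ex]]] := @rmono V x i0.
have Rxv : rho x v = vscale (a * d) (ev K i') by rewrite Ev rscale ?Ex ?vscaleM //; apply: fs_ev.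
pose y := gi i'; pose h := mul (inv y) x.
pose ka := a * d * kinv (lam i').
have Rh : rho h v = vscale ka v.
  by rewrite rmul // Rxv rscale ?rho_inv_e ?vscaleM //; apply: fs_ev.
have Th := Hst1 _ _ Rh.
have Ex' : x = mul y h by rewrite /h mulKVg.
rewrite Ex' (rmul y h w Hw) Th rscale // -phi_gi -(lin_scale phi_lin); last exact: rfs.
by rewrite (rmul y h v Hv) Rh rscale.
Qed.

Let phi_equiv g f : fin_supp f -> phi0 (rho g f) = tau g (phi0 f).
Proof.
apply: (lin_ext (lin_comp (@rlin V g) phi_lin) (lin_comp phi_lin (@rlin W g))) => i /=.
have Ei : ev K i = vscale (kinv (lam i)) (rho (gi i) v) by rewrite giP (vscaleK HK).
have F1 : fin_supp (rho (gi i) v) := rfs (gi i) v Hv.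
rewrite Ei (rscale g _ _ F1) (lin_scale phi_lin _ (rfs g _ F1)) (lin_scale phi_lin _ F1).
rewrite -(rmul g (gi i) v Hv) !phi_orbit (rmul g (gi i) w Hw) (rscale g _ _ (rfs (gi i) w Hw)).
by [].
Qed.

Lemma build : exists phi, is_linear phi /\ (forall x, phi (rho x v) = tau x w) /\
  (forall g f, fin_supp f -> phi (rho g f) = tau g (phi f)).
Proof. exists phi0; split; [exact: phi_lin | split; [exact: phi_orbit | exact: phi_equiv]]. Qed.

End Build.

Definition bvec (I : Type) (v : I -> K) := exists i a, a != 0 /\ v = vscale a (ev K i).

Lemma bvec_fs I (v : I -> K) : bvec I v -> fin_supp v.
Proof. by move=> [i [a [_ ->]]]; apply/fs_scale/fs_ev. Qed.

Lemma bvec_nz I (v : I -> K) : bvec I v -> v <> vzero.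
Proof.
move=> [i [a [Ha Ev]]] E; have := congr1 (fun f => f i) Ev.
by rewrite E /vscale /vzero ev_self mulr1 => /esym /eqP; rewrite (negbTE Ha).
Qed.

Lemma bvec_ev I (i : I) : bvec I (ev K i).
Proof. exists i, 1; split; [exact: one_neq0 | by rewrite vscale1]. Qed.

Lemma bvec_rho (V : rep K mul one) g v : bvec _ v -> bvec _ (ract V g v).
Proof.
move=> [i [a [Ha ->]]]; have [j [d [Hd E]]] := @rmono V g i.
exists j, (a * d); split; first exact: mul_neq0'.
by rewrite rscale ?E ?vscaleM //; apply: fs_ev.
Qed.

Implicit Types p q : (G -> Prop) * (G -> K).
Definition conj_by p q g :=
  (forall x, q.1 x <-> p.1 (mul (inv g) (mul x g))) /\
  (forall h, q.1 h -> q.2 h = p.2 (mul (inv g) (mul h g))).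

Lemma eq_conj p p' q : chpair_eq p p' -> chpair_conj mul inv p' q -> chpair_conj mul inv p q.
Proof.
move=> [E1 E2] [g [C1 C2]]; exists g; split.
  by move=> x; rewrite C1 E1.
move=> h Hh; rewrite C2 // E2 //; apply/E1/C1 => //.
Qed.

Lemma conj_eq p q q' : chpair_conj mul inv p q -> chpair_eq q q' -> chpair_conj mul inv p q'.
Proof.
move=> [g [C1 C2]] [E1 E2]; exists g; split.
  by move=> x; rewrite -E1 C1.
move=> h /E1 Hh; rewrite -E2 // C2 //.
Qed.

Lemma conj_unique p q q' g : conj_by p q g -> conj_by p q' g -> chpair_eq q q'.
Proof.
move=> [C1 C2] [C1' C2']; split.
  by move=> x; rewrite C1 C1'.
move=> h Hh; rewrite C2 // C2' //; apply/C1'/C1 => //.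
Qed.

Lemma Phi_conj (V : rep K mul one) u g c : fin_supp u -> u <> vzero -> c != 0 ->
  conj_by (Phi V u) (Phi V (vscale c (ract V g u))) g.
Proof.
move=> Hu Hnz Hc.
set u' := vscale c (ract V g u).
have Hu' : fin_supp u' by apply/fs_scale/rfs.
have Eg : ract V g u = vscale (kinv c) u' by rewrite /u' (vscaleK HK).
have Hnz' : u' <> vzero.
  move=> E; apply: (rnz g u Hu Hnz); by rewrite Eg E vscalez.
have R3 : forall x, ract V (mul (inv g) (mul x g)) u = ract V (inv g) (ract V x (ract V g u)).
  by move=> x; rewrite rmul // rmul.
have key : forall x d, ract V x u' = vscale d u' <-> ract V (mul (inv g) (mul x g)) u = vscale d u.
  move=> x d; split => E.
  - rewrite R3 Eg (rscale x _ _ Hu') E.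
    rewrite (rscale (inv g) _ _ (fs_scale d Hu')) (rscale (inv g) _ _ Hu') /u'.
    rewrite (rscale (inv g) _ _ (rfs g u Hu)) rVK //.
    by rewrite !vscaleM -mulrA (mulrC d) mulrA (kinvP' HK Hc) mul1r.
  - have F : fin_supp (ract V x (ract V g u)) by apply: rfs; apply: rfs.
    rewrite /u' (rscale x _ _ (rfs g u Hu)) -(rKV g _ F).
    by rewrite -R3 E (rscale g _ _ Hu) !vscaleM mulrC.
split => /=.
  by move=> x; split => -[d Hd]; exists d; apply/key.
move=> h Sh; symmetry; apply: chr_eq => //; apply: (proj1 (key h _)); exact: chrP.
Qed.

Lemma ev_orbit (V : rep K mul one) v i0 a : a != 0 -> v = vscale a (ev K i0) -> trans V ->
  forall i, exists g k, ev K i = vscale k (ract V g v).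
Proof.
move=> Ha Ev Ht i; have [g [c [Hc E]]] := Ht i0 i; exists g, (kinv (a * c)).
have Hac : a * c != 0 := mul_neq0' HK Ha Hc.
rewrite Ev rscale ?E ?vscaleM; last exact: fs_ev.
by rewrite -mulrA (kinvP' HK Hac) vscale1.
Qed.

Lemma pair_iso_of_eq (V W : rep K mul one) v w : indecomposable V -> indecomposable W ->
  bvec _ v -> bvec _ w -> chpair_eq (Phi V v) (Phi W w) -> pair_iso V v W w.
Proof.
move=> IV IW bv bw [Eq1 Eq2].
have HtV := indec_trans V IV; have HtW := indec_trans W IW.
have Hv := bvec_fs _ _ bv; have Hw := bvec_fs _ _ bw.
have Nv := bvec_nz _ _ bv; have Nw := bvec_nz _ _ bw.
move: (bv) (bw) => [i0 [a [Ha Ev]]] [j0 [b0 [Hb Ew]]].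
have Hst1 : forall h c, ract V h v = vscale c v -> ract W h w = vscale c w.
  move=> h c E; have S : stab V v h by exists c.
  have S' : stab W w h by apply/(Eq1 h).
  have E2 : chr V v h = chr W w h := Eq2 h S.
  rewrite (chrP w h S') -E2 (chr_eq V v h c) //.
have Hst2 : forall h c, ract W h w = vscale c w -> ract V h v = vscale c v.
  move=> h c E; have S' : stab W w h by exists c.
  have S : stab V v h by apply/(Eq1 h).
  have E2 : chr V v h = chr W w h := Eq2 h S.
  rewrite (chrP v h S) E2 (chr_eq W w h c) //.
have [phi [Hl [Ho He]]] := build V W v w i0 a j0 b0 Ha Ev Hb Ew HtV Hst1 Hst2.
have [psi [Hl' [Ho' He']]] := build W V w v j0 b0 i0 a Hb Ew Ha Ev HtW Hst2 Hst1.
have PP : forall f, fin_supp f -> psi (phi f) = f.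
  suff L : forall i, psi (phi (ev K i)) = ev K i by exact: (lin_ext (lin_comp Hl Hl') (lin_id K _) L).
  move=> i.
  have [g [k E]] := ev_orbit V v i0 a Ha Ev HtV i.
  by rewrite E (lin_scale Hl _ (rfs g v Hv)) Ho (lin_scale Hl' _ (rfs g w Hw)) Ho'.
have PP' : forall f, fin_supp f -> phi (psi f) = f.
  suff L : forall i, phi (psi (ev K i)) = ev K i by exact: (lin_ext (lin_comp Hl' Hl) (lin_id K _) L).
  move=> i.
  have [g [k E]] := ev_orbit W w j0 b0 Hb Ew HtW i.
  by rewrite E (lin_scale Hl' _ (rfs g w Hw)) Ho' (lin_scale Hl _ (rfs g v Hv)) Ho.
exists phi; split.
  split => //; split; last exact: He.
  by exists psi.
by rewrite -(rone v Hv) Ho rone.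
Qed.


Lemma invgK x : inv (inv x) = x.
Proof. by rewrite -{2}(mulKg (inv x) x) mulVg mulg1. Qed.
Lemma invg1 : inv one = one.
Proof. by rewrite -(mulg1 (inv one)) mulVg. Qed.
Lemma invMg x y : inv (mul x y) = mul (inv y) (inv x).
Proof.
have E : mul (mul x y) (mul (inv y) (inv x)) = one.
  by rewrite -mulgA (mulgA y) mulgV mul1g mulgV.
by rewrite -[LHS]mulg1 -E mulKg.
Qed.

Section Induced.
Variables (H : G -> Prop) (chi : G -> K).
Hypothesis Hp : chpair_valid mul one inv (H, chi).

Let H1 : H one. Proof. by case: Hp => [[]]. Qed.
Let HM x y : H x -> H y -> H (mul x y). Proof. by case: Hp => [[_ []]] H2 _ _; apply: H2. Qed.
Let HV x : H x -> H (inv x). Proof. by case: Hp => [[_ []]] _ H3 _; apply: H3. Qed.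
Let chi_nz h : H h -> chi h != 0. Proof. by case: Hp => _ [] H4 _; apply: H4. Qed.
Let chiM h k : H h -> H k -> chi (mul h k) = chi h * chi k. Proof. by case: Hp => _ [] _ H5; apply: H5. Qed.
Let chi1 : chi one = 1.
Proof.
have E := chiM one one H1 H1; rewrite mulg1 in E.
have c0 := chi_nz one H1.
by rewrite -(kinvP' HK c0) {3}E mulrA (kinvP' HK c0) mul1r.
Qed.

Definition coset g : G -> Prop := fun z => H (mul (inv g) z).
Definition CI := {S : G -> Prop | exists g, S = coset g}.
Definition Cs g : CI := exist _ (coset g) (ex_intro _ g erefl).

Lemma Cs_eq g g' : H (mul (inv g) g') -> Cs g = Cs g'.
Proof.
move=> Hg.
have E : coset g = coset g'.
  apply: functional_extensionality => z; apply: propositional_extensionality; rewrite /coset.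
  split => Hz.
  - have -> : mul (inv g') z = mul (inv (mul (inv g) g')) (mul (inv g) z).
      by rewrite invMg invgK -mulgA mulKVg.
    by apply: HM => //; apply: HV.
  - have -> : mul (inv g) z = mul (mul (inv g) g') (mul (inv g') z) by rewrite -mulgA mulKVg.
    by apply: HM.
rewrite /Cs; move: (ex_intro _ g _) (ex_intro _ g' _); rewrite E => p1 p2.
by rewrite (proof_irrelevance _ p1 p2).
Qed.

Lemma Cs_inj g g' : Cs g = Cs g' -> H (mul (inv g) g').
Proof.
move=> E; have := congr1 (fun S => proj1_sig S g') E; rewrite /= /coset => ->.
by rewrite mulVg.
Qed.

Definition rp (S : CI) : G := proj1_sig (constructive_indefinite_description _ (proj2_sig S)).

Lemma rpP S : S = Cs (rp S).
Proof.
case: S => S HS; rewrite /rp /=; case: (constructive_indefinite_description _ _) => g Eg /=.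
subst S; rewrite /Cs; by rewrite (proof_irrelevance _ HS (ex_intro _ g erefl)).
Qed.

Lemma rp_in S g : S = Cs g -> H (mul (inv g) (rp S)).
Proof. move=> E; apply: Cs_inj; by rewrite -E -rpP. Qed.

Definition lact x S := Cs (mul x (rp S)).

Lemma lact_Cs x g : lact x (Cs g) = Cs (mul x g).
Proof.
apply: Cs_eq; rewrite invMg -mulgA mulKg.
have := HV _ (rp_in (Cs g) g erefl); by rewrite invMg invgK.
Qed.

Lemma lactM x y S : lact x (lact y S) = lact (mul x y) S.
Proof. by rewrite {2}/lact lact_Cs mulgA. Qed.
Lemma lact1 S : lact one S = S.
Proof. by rewrite /lact mul1g -rpP. Qed.
Lemma lactK x S : lact (inv x) (lact x S) = S.
Proof. by rewrite lactM mulVg lact1. Qed.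
Lemma lactKV x S : lact x (lact (inv x) S) = S.
Proof. by rewrite lactM mulgV lact1. Qed.

Definition coef x T := chi (mul (inv (rp T)) (mul x (rp (lact (inv x) T)))).

Lemma coef_in x T : H (mul (inv (rp T)) (mul x (rp (lact (inv x) T)))).
Proof.
have := rp_in (lact (inv x) T) (mul (inv x) (rp T)) erefl.
by rewrite invMg invgK -mulgA.
Qed.

Definition act x (f : CI -> K) : CI -> K := fun T => f (lact (inv x) T) * coef x T.

Lemma act_rep : is_rep K G mul one CI act.
Proof.
split.
- move=> x; split; [|split].
  + move=> f [s Hs]; exists (map (lact x) s) => T HT; rewrite /act Hs ?mul0r //.
    move=> HT'; apply: HT; rewrite -(lactKV x T); exact: List.in_map.
  + move=> f g _ _; apply: functional_extensionality => T; by rewrite /act /vadd mulrDl.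
  + move=> c f _; apply: functional_extensionality => T; by rewrite /act /vscale mulrA.
- move=> f _; apply: functional_extensionality => T.
  by rewrite /act /coef invg1 lact1 mul1g mulVg chi1 mulr1.
- move=> x y f _; apply: functional_extensionality => T; rewrite /act lactM -invMg -mulrA.
  congr (_ * _); rewrite /coef mulrC -chiM; try exact: coef_in.
  rewrite lactM -invMg; congr chi.
  by symmetry; rewrite -mulgA -(mulgA x) mulKVg (mulgA x y).
Qed.

Definition IndRep : rep K mul one := @Rep K G mul one CI act act_rep.

Lemma act_ev x S : act x (ev K S) = vscale (coef x (lact x S)) (ev K (lact x S)).
Proof.
apply: functional_extensionality => T; rewrite /act /vscale.
destruct (pdec (T = lact x S)) as [E|E].
- by subst T; rewrite lactK !ev_self mul1r mulr1.
- rewrite !ev_ne ?mul0r ?mulr0 // => E'; apply: E; by rewrite -E' lactKV.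
Qed.

Lemma Ind_trans : trans IndRep.
Proof.
move=> S T; set x := mul (rp T) (inv (rp S)).
have Ex : lact x S = T.
  by rewrite {1}(rpP S) lact_Cs /x -mulgA mulVg mulg1 -rpP.
exists x, (coef x T); split; first exact/chi_nz/coef_in.
by rewrite /= act_ev Ex.
Qed.

Lemma Ind_indec : indecomposable IndRep.
Proof. apply: trans_indec; [by exists (Cs one) | exact: Ind_trans]. Qed.

Lemma Ind_Phi : chpair_eq (Phi IndRep (ev K (Cs one))) (H, chi).
Proof.
have lS0 : forall x, H x -> lact x (Cs one) = Cs one.
  move=> x Hx; rewrite lact_Cs mulg1; apply: Cs_eq; by rewrite mulg1; apply: HV.
have r0 : H (rp (Cs one)) by have := rp_in (Cs one) one erefl; rewrite invg1 mul1g.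
have coefS0 : forall x, H x -> coef x (Cs one) = chi x.
  move=> x Hx.
  have Hr' : H (inv (rp (Cs one))) := HV _ r0.
  have Hxr : H (mul x (rp (Cs one))) := HM _ _ Hx r0.
  rewrite /coef (lS0 _ (HV _ Hx)) (chiM _ _ Hr' Hxr) (chiM _ _ Hx r0) mulrCA.
  by rewrite -(chiM _ _ Hr' r0) mulVg chi1 mulr1.
have Ex : forall x, H x -> ract IndRep x (ev K (Cs one)) = vscale (chi x) (ev K (Cs one)).
  by move=> x Hx; rewrite /= act_ev lS0 // coefS0.
split => /=.
- move=> x; split.
  + move=> [c Hc]; move: Hc; rewrite /= act_ev => Hc.
    have E := e_inj (chi_nz _ (coef_in _ _)) Hc.
    move: E; rewrite lact_Cs mulg1 => /esym /Cs_inj; rewrite invg1 mul1g.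
    by [].
  + by move=> Hx; exists (chi x); apply: Ex.
- move=> h [c Hc]; apply: chr_eq; [exact: fs_ev | exact: ev_neq0 |].
  apply: Ex; move: Hc; rewrite /= act_ev => Hc.
  have E := e_inj (chi_nz _ (coef_in _ _)) Hc.
  move: E; rewrite lact_Cs mulg1 => /esym /Cs_inj; rewrite invg1 mul1g.
  by [].
Qed.

End Induced.

Lemma conj_to (V : rep K mul one) u u' : trans V -> bvec _ u -> bvec _ u' ->
  chpair_conj mul inv (Phi V u) (Phi V u').
Proof.
move=> Ht bu bu'; have Hu := bvec_fs _ _ bu; have Nu := bvec_nz _ _ bu.
move: bu bu' => [i [a [Ha Eu]]] [k [b [Hb Eu']]].
have [g [c [Hc E]]] := Ht i k.
have Hac : a * c != 0 := mul_neq0' HK Ha Hc.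
have Ek : ract V g u = vscale (a * c) (ev K k).
  by rewrite Eu rscale ?E ?vscaleM //; apply: fs_ev.
have Hk : b * kinv (a * c) != 0 := mul_neq0' HK Hb (kinv_neq0 HK Hac).
exists g; have := Phi_conj V u g _ Hu Nu Hk.
by rewrite Ek vscaleM -mulrA (kinvP' HK Hac) mulr1 -Eu'.
Qed.

Definition bv (V : rep K mul one) : rI V -> K :=
  match pdec (exists v : rI V -> K, in_some_basis v) with
  | left H => proj1_sig (constructive_indefinite_description _ H)
  | right _ => vzero end.

Lemma bv_basis V : indecomposable V -> in_some_basis (bv V).
Proof.
move=> [[f [Hf Hnz]] _]; have [k _] := nz_coord Hnz.
rewrite /bv; case: pdec => [H|H].
  exact: proj2_sig (constructive_indefinite_description _ H).
by exfalso; apply: H; exists (ev K k); apply: in_basis_ev.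
Qed.

Lemma main_lemma :
  (exists Phi : forall V : rep K mul one, (rI V -> K) -> (G -> Prop) * (G -> K),
     (forall V v, indecomposable V -> in_some_basis v -> chpair_valid mul one inv (Phi V v)) /\
     (forall V v W w, indecomposable V -> in_some_basis v ->
                      indecomposable W -> in_some_basis w ->
        (pair_iso V v W w <-> chpair_eq (Phi V v) (Phi W w))) /\
     (forall p, chpair_valid mul one inv p ->
        exists V v, indecomposable V /\ in_some_basis v /\ chpair_eq (Phi V v) p))
  /\
  (exists Psi : rep K mul one -> (G -> Prop) * (G -> K),
     (forall V, indecomposable V -> chpair_valid mul one inv (Psi V)) /\
     (forall V W, indecomposable V -> indecomposable W ->
        (rep_iso V W <-> chpair_conj mul inv (Psi V) (Psi W))) /\
     (forall p, chpair_valid mul one inv p ->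
        exists V, indecomposable V /\ chpair_conj mul inv (Psi V) p)).
Proof.
split.
- exists Phi; split; [|split].
  + move=> V v _ /basis_char bv; apply: Phi_valid; [exact: bvec_fs | exact: bvec_nz].
  + move=> V v W w IV /basis_char bv IW /basis_char bw; split.
    * move=> [phi [Hiso Hphi]]; apply: (iso_Phi V W phi v w Hiso Hphi);
        [exact: bvec_fs | exact: bvec_nz].
    * exact: pair_iso_of_eq.
  + move=> [H chi] Hp; exists (IndRep H chi Hp), (ev K (Cs H one)); split.
      exact: Ind_indec.
    split; [exact: in_basis_ev | exact: Ind_Phi].
- exists (fun V => Phi V (bv V)); split; [|split].
  + move=> V IV; have /basis_char bv := bv_basis V IV.
    apply: Phi_valid; [exact: bvec_fs | exact: bvec_nz].
  + move=> V W IV IW.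
    have /basis_char bV := bv_basis V IV; have /basis_char bW := bv_basis W IW.
    have HtW := indec_trans W IW.
    split.
    * move=> [phi Hiso]; move: (Hiso) => [Hl [[psi [Hpsi [PP PP']]] Heq]].
      move: (bV) => [i [a [Ha Ev]]].
      have [j [d [Hd Ej]]] := mono HK HKz Hl Hpsi PP PP' i.
      have bw' : bvec _ (phi (bv V)).
        exists j, (a * d); split; first exact: mul_neq0'.
        by rewrite Ev (lin_scale Hl) ?Ej ?vscaleM //; apply: fs_ev.
      apply: (eq_conj _ (Phi W (phi (bv V)))).
        apply: (iso_Phi V W phi _ _ Hiso erefl); [exact: bvec_fs | exact: bvec_nz].
      exact: conj_to.
    * move=> [g C].
      have C' := Phi_conj V (bv V) g 1 (bvec_fs _ _ bV) (bvec_nz _ _ bV) (one_neq0 K).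
      rewrite vscale1 in C'.
      have E := conj_unique _ _ _ g C' C.
      have [phi [Hphi _]] := pair_iso_of_eq V W _ _ IV IW (bvec_rho V g _ bV) bW E.
      by exists phi.
  + move=> [H chi] Hp; exists (IndRep H chi Hp); split; first exact: Ind_indec.
    have IV := Ind_indec H chi Hp.
    have /basis_char bV := bv_basis _ IV.
    apply: conj_eq (Ind_Phi H chi Hp).
    apply: conj_to; [exact: indec_trans | exact: bV | exact: bvec_ev].
Qed.
End B.

Set Implicit Arguments.

Theorem proposition3p13 (G : Type) (mul : G -> G -> G) (one : G) (inv : G -> G)
  (HG : is_group mul one inv)
  (K : comNzSemiRingType) (HK : semifield K) (HKz : zero_sum_free K) :
  (* (1) *)
  (exists Phi : forall V : rep K mul one, (rI V -> K) -> (G -> Prop) * (G -> K),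
     (forall V v, indecomposable V -> in_some_basis v -> chpair_valid mul one inv (Phi V v)) /\
     (forall V v W w, indecomposable V -> in_some_basis v ->
                      indecomposable W -> in_some_basis w ->
        (pair_iso V v W w <-> chpair_eq (Phi V v) (Phi W w))) /\
     (forall p, chpair_valid mul one inv p ->
        exists V v, indecomposable V /\ in_some_basis v /\ chpair_eq (Phi V v) p))
  /\
  (* (2) *)
  (exists Psi : rep K mul one -> (G -> Prop) * (G -> K),
     (forall V, indecomposable V -> chpair_valid mul one inv (Psi V)) /\
     (forall V W, indecomposable V -> indecomposable W ->
        (rep_iso V W <-> chpair_conj mul inv (Psi V) (Psi W))) /\
     (forall p, chpair_valid mul one inv p ->
        exists V, indecomposable V /\ chpair_conj mul inv (Psi V) p)).
Proof. exact: (main_lemma G mul one inv HG K HK HKz). Qed.
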